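(* Let $(p_n)_{n\ge1}$ be a sequence in $[0,1]$ with $p_n \gg \frac{1}{n^3}$, i.e. $\lim_{n\to\infty} n^3 p_n = \infty$. Let $G_n$ be the Erdős–Rényi random graph on the vertex set $\mathcal C^0_n$ (with $N_n=|\mathcal C^0_n|$ vertices) with edge probability $p_n$, and let $R_n$ be the reaction network associated to $G_n$. Then \[ \lim_{n\to\infty}\mathbb P(\delta_{R_n}=0)=0 . \]
   Context: A reaction network on species $S_1,\dots,S_n$ consists of a finite set $\mathcal R$ of reactions $y\to y'$ where $y\neq y'$ are complexes, i.e. vectors in $\mathbb Z^n_{\ge0}$; $\mathcal C$ is the set of complexes appearing in some reaction. Its graph has vertex set $\mathcal C$ and a directed edge $y\to y'$ for each reaction; $\ell$ denotes the number of connected components of this graph (ignoring edge directions), $s=\dim\operatorname{span}\{y'-y: y\to y'\in\mathcal R\}$, and the deficiency is $\delta=|\mathcal C|-\ell-s$ (the empty network, with no reactions, has $\delta=0$). Let $e_i$ be the $i$-th standard basis vector of $\mathbb Z^n$ and $\mathcal C^0_n=\{0\}\cup\{e_i:1\le i\le n\}\cup\{e_i+e_j:1\le i\le j\le n\}$, so $N_n=|\mathcal C^0_n|=\frac{n^2+3n+2}{2}$. $G_n$ is the Erdős–Rényi random graph on vertex set $\mathcal C^0_n$ in which each of the $\binom{N_n}{2}$ possible undirected edges is present independently with probability $p_n$. The associated reaction network $R_n$ has species $S_1,\dots,S_n$, complex set equal to the set of vertices of $G_n$ of positive degree, and for each edge $\{y,y'\}$ of $G_n$ the two reactions $y\to y'$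 and $y'\to y$. $\delta_{R_n}$ denotes the deficiency of $R_n$. *)

(* Defs.v *)
From HB Require Import structures.
From mathcomp Require Import all_boot all_order all_algebra.
From Stdlib Require Import Reals.
Set Implicit Arguments. Unset Strict Implicit. Unset Printing Implicit Defensive.

(* Complexes with entries in {0,1,2} (enough to contain C^0_n); a complex
   is a vector y : 'I_n -> 'I_3, read as an element of Z_{>=0}^n. *)
Definition cplx (n : nat) := {ffun 'I_n -> 'I_3}.

Definition zero_cplx (n : nat) : cplx n := [ffun _ => inord 0].
Definition e_cplx (n : nat) (i : 'I_n) : cplx n :=
  [ffun k => inord (i == k)].
Definition ee_cplx (n : nat) (i j : 'I_n) : cplx n :=
  [ffun k => inord ((i == k) + (j == k))].

Definition C0 (n : nat) : {set cplx n} :=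
  [set zero_cplx n] :|: [set e_cplx i | i : 'I_n]
    :|: [set ee_cplx ij.1 ij.2 | ij : 'I_n * 'I_n & (ij.1 <= ij.2)%N].

Definition pedges (n : nat) : {set {set cplx n}} :=
  [set e : {set cplx n} | (e \subset C0 n) && (#|e| == 2)%N].

(* A graph G on C^0_n is given by its edge set E \subset pedges n. *)

(* Complexes of the associated network = vertices of positive degree. *)
Definition net_complexes (n : nat) (E : {set {set cplx n}}) : {set cplx n} :=
  cover E.

Definition adj (n : nat) (E : {set {set cplx n}}) : rel (cplx n) :=
  fun x y => [set x; y] \in E.

Definition n_linkage (n : nat) (E : {set {set cplx n}}) : nat :=
  #|[set [set y in net_complexes E | connect (adj E) x y]
       | x in net_complexes E]|.

Local Open Scope ring_scope.
Definition rvec (n : nat) (y y' : cplx n) : 'rV[rat]_n :=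
  \row_k ((nat_of_ord (y' k))%:R - (nat_of_ord (y k))%:R).

(* s = dim span {y' - y : y -> y' reaction}; reactions are both
   orientations of every edge. *)
Definition stoich_rank (n : nat) (E : {set {set cplx n}}) : nat :=
  \rank (\sum_(r : cplx n * cplx n | [set r.1; r.2] \in E)
           <<rvec r.1 r.2>>)%MS.

Definition deficiency (n : nat) (E : {set {set cplx n}}) : int :=
  #|net_complexes E|%:Z - (n_linkage E)%:Z - (stoich_rank E)%:Z.
Local Close Scope ring_scope.

Definition ER_weight (n : nat) (p : R) (E : {set {set cplx n}}) : R :=
  Rmult (pow p #|E|) (pow (Rminus 1 p) (#|pedges n| - #|E|)).

Definition prob_def0 (n : nat) (p : R) : R :=
  \big[Rplus/R0]_(E : {set {set cplx n}} |
                     (E \subset pedges n) && (deficiency E == Posz 0))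
     ER_weight p E.

(* Main.v *)
Require Import Defs.
From HB Require Import structures.
From mathcomp Require Import all_boot all_order all_algebra.
From mathcomp Require Import Rstruct.
From Stdlib Require Import Reals.
From mathcomp Require Import zify ring lra.
Set Implicit Arguments. Unset Strict Implicit. Unset Printing Implicit Defensive.
Import Order.TTheory GRing.Theory Num.Theory.

Lemma adj_sym n (E : {set {set cplx n}}) : symmetric (adj E).
Proof. by move=> x y; rewrite /adj setUC. Qed.

Lemma linkage_le n (E : {set {set cplx n}}) :
  E \subset pedges n -> (2 * n_linkage E <= #|net_complexes E|)%nat.
Proof.
move=> sE.
have eqR : {in net_complexes E & &, equivalence_rel (connect (adj E))}.
  move=> x y z _ _ _; split; first exact: connect0.
  move=> Rxy; apply/idP/idP => H.
    by apply: connect_trans H; rewrite (sym_connect_sym (@adj_sym n E)).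
  exact: connect_trans Rxy H.
have hP := equivalence_partitionP eqR.
rewrite /n_linkage (card_partition hP) -/(equivalence_partition _ _).
rewrite mulnC -sum_nat_const; apply: leq_sum => B /imsetP [x xC ->].
move: (xC) => /bigcupP [e eE xe].
have /subsetP/(_ _ eE) := sE; rewrite inE => /andP [_ /cards2P [a [b [ab ee]]]].
have [y [xy ye]] : exists y, x != y /\ [set x; y] = e.
  move: xe; rewrite ee !inE => /orP [] /eqP ->.
    by exists b; split.
  by exists a; split; [rewrite eq_sym | rewrite setUC].
have yC : y \in net_complexes E.
  by apply/bigcupP; exists e => //; rewrite -ye !inE eqxx orbT.
apply: (@leq_trans #|[set x; y]|); first by rewrite cards2 xy.
apply: subset_leq_card; apply/subsetP => z.
rewrite !inE => /orP [] /eqP ->; rewrite ?xC ?yC /= ?connect0 //.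
by apply: connect1; rewrite /adj ye.
Qed.

Lemma def0_cover n (E : {set {set cplx n}}) :
  E \subset pedges n -> deficiency E = Posz 0 -> (#|net_complexes E| <= 2 * n)%nat.
Proof.
move=> sE; rewrite /deficiency => hd.
have hl := linkage_le sE.
have hs : (stoich_rank E <= n)%nat by apply: rank_leq_col.
move: hd hl hs; lia.
Qed.

Lemma ee_val n (i j k : 'I_n) : nat_of_ord (ee_cplx i j k) = ((i == k) + (j == k))%nat.
Proof. by rewrite /ee_cplx ffunE inordK //; case: (i == k); case: (j == k). Qed.

Lemma ee_inj n : {in [pred ij : 'I_n * 'I_n | (ij.1 <= ij.2)%nat] &,
   injective (fun ij : 'I_n * 'I_n => ee_cplx ij.1 ij.2)}.
Proof.
move=> [i j] [i' j']; rewrite !inE /= => hij hij' he.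
have H k : ((i == k) + (j == k) = (i' == k) + (j' == k))%nat by rewrite -!ee_val he.
suff [e1 e2] : val i = val i' /\ val j = val j' by rewrite (val_inj e1) (val_inj e2).
move: (H i) (H j) (H i') (H j') hij hij'.
rewrite -!val_eqE /= !eqxx.
case: i j i' j' {H he} => a ? [b ?] [c ?] [d ?] /=.
repeat case: eqP; lia.
Qed.

Lemma card_pairs_le n :
  (n * n <= 2 * #|[set ij : 'I_n * 'I_n | (ij.1 <= ij.2)%nat]|)%nat.
Proof.
set P := [set ij : 'I_n * 'I_n | _].
have hT : [set: 'I_n * 'I_n] = P :|: [set (ij.2, ij.1) | ij in P].
  apply/setP => [[i j]]; rewrite !inE /=; case: (leqP i j) => //= hji; apply/esym.
  apply/imsetP; exists (j, i) => //; rewrite inE /=; exact: ltnW.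
have := cardsU P [set (ij.2, ij.1) | ij in P]; rewrite -hT cardsT card_prod card_ord.
have := leq_imset_card (fun ij : 'I_n * 'I_n => (ij.2, ij.1)) P.
move: #|P :&: _| => k.
rewrite -/(#|[set (ij.2, ij.1) | ij in P]|). lia.
Qed.

Lemma C0_card n : (n * n <= 2 * #|C0 n|)%nat.
Proof.
apply: leq_trans (card_pairs_le n) _; rewrite leq_mul2l /=.
set P := [set ij : 'I_n * 'I_n | _].
have inj : {in P &, injective (fun ij : 'I_n * 'I_n => ee_cplx ij.1 ij.2)}.
  by move=> a b; rewrite !inE => ha hb; apply: ee_inj.
rewrite -(card_in_imset inj).
apply: subset_leq_card; apply/subsetP => y /imsetP [ij hij ->].
rewrite /C0; apply/setUP; right; apply/imsetP; exists ij => //.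

Qed.

Lemma split_set (T : finType) (D : {set T}) :
  exists S T' : {set T}, [/\ S \subset D, T' \subset D, [disjoint S & T'],
     (#|D| <= 2 * #|S| + 1)%nat & (#|D| <= 2 * #|T'|)%nat].
Proof.
set k := (#|D| %/ 2)%nat.
set S := [set x in take k (enum D)].
have hS : #|S| = k.
  rewrite cardsE (card_uniqP (take_uniq _ (enum_uniq _))).
  rewrite size_take -cardE; case: ltnP => // h; lia.
have sS : S \subset D by apply/subsetP => x; rewrite inE => /mem_take; rewrite mem_enum.
exists S, (D :\: S); split => //; first exact: subsetDl.
- by rewrite disjoint_sym disjoints_subset subsetDr.
- rewrite hS; lia.
- have := cardsID S D; rewrite (setIidPr sS) hS; lia.
Qed.

Section Alg.
Local Open Scope ring_scope.

Definition W (K : realFieldType) (I : finType) (U : {set I}) (p : K) (E : {set I}) : K :=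
  p ^+ #|E| * (1 - p) ^+ (#|U| - #|E|).

Definition ind (K : realFieldType) (b : bool) : K := if b then 1 else 0.

Lemma keylem (K : realFieldType) (I : finType) (U A : {set I}) (p : K) :
  A \subset U ->
  \sum_(E : {set I} | E \subset U) W U p E * ind K [disjoint A & E] = (1 - p) ^+ #|A|.
Proof.
move=> sAU.
pose F i : K := if (i \in U) && (i \notin A) then p else 0.
pose G i : K := if i \in U then 1 - p else 1.
have h1 : \prod_i (F i + G i) = (1 - p) ^+ #|A|.
  rewrite -prodr_const (big_mkcond (fun i => i \in A)) /=.
  apply: eq_bigr => i _; rewrite /F /G.
  case: (boolP (i \in A)) => iA.
    by rewrite (subsetP sAU _ iA) /= add0r.
  by case: (i \in U) => /=; rewrite ?add0r ?addr0 // addrC subrK.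
rewrite -h1 bigA_distr big_mkcond /=; apply: eq_bigr => J _.
case: (boolP (J \subset U)) => sJU /=; last first.
  have [i iJ iU] := subsetPn sJU.
  by rewrite (bigD1 i) //= iJ /F (negbTE iU) /= mul0r.
case: (boolP [disjoint A & J]) => dAJ; last first.
  case/pred0Pn: dAJ => i /andP [/= iA iJ].
  by rewrite (bigD1 i) //= iJ /F (subsetP sAU _ iA) iA /= mul0r /ind mulr0.
rewrite /ind mulr1 /W; symmetry.
transitivity (\prod_i (if i \in J then p else G i)).
  apply: eq_bigr => i _; case: (boolP (i \in J)) => // iJ.
  rewrite /F (subsetP sJU _ iJ) /=.
  by case: (boolP (i \in A)) => // iA; move: (disjointFr dAJ iA); rewrite iJ.
rewrite (bigID (fun i => i \in J)) /=.
rewrite (eq_bigr (fun=> p)); last by move=> i ->.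
rewrite prodr_const.
rewrite (eq_bigr (fun i => if i \in U then 1 - p else 1)); last by move=> i /negbTE ->.
rewrite -big_mkcondr /= prodr_const.
congr (_ * _ ^+ _).
transitivity #|U :\: J|.
  by apply: eq_card => i; rewrite in_setD -topredE /= andbC.
have := cardsID J U.
have -> : U :&: J = J by apply/setIidPr; exact: sJU.
lia.
Qed.

Definition Ex (K : realFieldType) (I : finType) (U : {set I}) (p : K) (f : {set I} -> K) :=
  \sum_(E : {set I} | E \subset U) W U p E * f E.

Lemma ExD (K : realFieldType) (I : finType) (U : {set I}) (p : K) f g : @Ex K I U p (fun E => f E + g E) = Ex U p f + Ex U p g.
Proof. by rewrite /Ex -big_split; apply: eq_bigr => E _; rewrite mulrDr. Qed.

Lemma ExZ (K : realFieldType) (I : finType) (U : {set I}) (p : K) (c : K) f : @Ex K I U p (fun E => c * f E) = c * Ex U p f.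
Proof. by rewrite /Ex big_distrr; apply: eq_bigr => E _; rewrite mulrCA. Qed.

Lemma Ex_sum (K : realFieldType) (I : finType) (U : {set I}) (p : K) (J : finType) (S : {set J}) (f : J -> {set I} -> K) :
  @Ex K I U p (fun E => \sum_(j in S) f j E) = \sum_(j in S) Ex U p (f j).
Proof.
rewrite /Ex (eq_bigr (fun E => \sum_(j in S) W U p E * f j E)); last first.
  by move=> E _; rewrite big_distrr.
by rewrite exchange_big.
Qed.

Lemma Ex1 (K : realFieldType) (I : finType) (U : {set I}) (p : K) : @Ex K I U p (fun _ => 1) = 1.
Proof.
transitivity ((1 - p) ^+ #|@set0 I|); last by rewrite cards0 expr0.
rewrite -(@keylem K I U set0 p) ?sub0set //.
by apply: eq_bigr => E _; rewrite /ind -setI_eq0 set0I eqxx.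
Qed.

Lemma W_ge0 (K : realFieldType) (I : finType) (U : {set I}) (p : K) E : 0 <= p <= 1 -> 0 <= @W K I U p E.
Proof. by case/andP => h0 h1; rewrite /W mulr_ge0 ?exprn_ge0 // subr_ge0. Qed.

Lemma Ex_le (K : realFieldType) (I : finType) (U : {set I}) (p : K) f g : 0 <= p <= 1 ->
  (forall E, E \subset U -> f E <= g E) -> @Ex K I U p f <= Ex U p g.
Proof.
move=> hp hfg; apply: ler_sum => E hE; apply: ler_wpM2l; first exact: W_ge0.
exact: hfg.
Qed.


Definition Aset (V : finType) (T : {set V}) (s : V) : {set {set V}} :=
  [set [set s; t] | t in T].

Lemma Aset_card (V : finType) (S T : {set V}) s :
  [disjoint S & T] -> s \in S -> #|Aset T s| = #|T|.
Proof.
move=> dST sS; apply: card_in_imset => t t' tT t'T /setP /(_ t').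
rewrite !inE eqxx orbT => /orP [/eqP ee|/eqP ->] //.
by move: (disjointFr dST sS); rewrite -ee t'T.
Qed.

Lemma Aset_disj (V : finType) (S T : {set V}) s s' :
  [disjoint S & T] -> s \in S -> s' \in S -> s != s' ->
  [disjoint Aset T s & Aset T s'].
Proof.
move=> dST sS s'S ss'; rewrite -setI_eq0; apply/eqP/setP => e; rewrite !inE.
apply/negP => /andP [/imsetP [t tT ->] /imsetP [t' t'T /setP /(_ s)]].
rewrite !inE eqxx /= => /esym /orP [/eqP ee|/eqP ee]; first by rewrite ee eqxx in ss'.
by move: (disjointFr dST sS); rewrite ee t'T.
Qed.

Lemma ind_mul (K : realFieldType) b c : ind K b * ind K c = ind K (b && c).
Proof. by case: b; case: c; rewrite /ind ?mulr1 ?mulr0 ?mul0r. Qed.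

Lemma disjU (I : finType) (A B C : {set I}) :
  [disjoint A :|: B & C] = [disjoint A & C] && [disjoint B & C].
Proof.
rewrite -disjointU; apply: eq_disjoint => x; rewrite !inE //.
Qed.

Lemma variance (K : realFieldType) (V : finType) (S T : {set V})
  (U : {set {set V}}) (p : K) :
  [disjoint S & T] ->
  (forall s t, s \in S -> t \in T -> [set s; t] \in U) ->
  let r := (1 - p) ^+ #|T| in
  let Y := fun E : {set {set V}} => \sum_(s in S) ind K [disjoint Aset T s & E] in
  Ex U p (fun E => (Y E - #|S|%:R * r) ^+ 2) = #|S|%:R * (r - r ^+ 2).
Proof.
move=> dST hU r Y.
have sAU s : s \in S -> Aset T s \subset U.
  by move=> sS; apply/subsetP => e /imsetP [t tT ->]; apply: hU.
have EZ s : s \in S -> Ex U p (fun E => ind K [disjoint Aset T s & E]) = r.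
  by move=> sS; rewrite /Ex keylem ?sAU // (Aset_card dST sS).
have EZZ s s' : s \in S -> s' \in S ->
    Ex U p (fun E => ind K [disjoint Aset T s & E] * ind K [disjoint Aset T s' & E])
    = r ^+ 2 + ind K (s == s') * (r - r ^+ 2).
  move=> sS s'S; case: (eqVneq s s') => [<-|ne].
    rewrite /ind mul1r addrC subrK -(EZ s sS); apply: eq_bigr => E _.
    by rewrite ind_mul andbb.
  rewrite /ind mul0r addr0.
  transitivity (Ex U p (fun E => ind K [disjoint Aset T s :|: Aset T s' & E])).
    by apply: eq_bigr => E _; rewrite ind_mul disjU.
  rewrite /Ex keylem; last by rewrite subUset !sAU.
  rewrite cardsU (disjoint_setI0 (Aset_disj dST sS s'S ne)) cards0 subn0.
  by rewrite !(Aset_card dST) // exprD.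
have EY : Ex U p Y = #|S|%:R * r.
  rewrite /Y Ex_sum (eq_bigr (fun=> r)); last by move=> s sS; rewrite EZ.
  by rewrite sumr_const mulr_natl.
have EYY : Ex U p (fun E => Y E * Y E) = #|S|%:R * (#|S|%:R * r ^+ 2 + (r - r ^+ 2)).
  rewrite /Y.
  transitivity (Ex U p (fun E => \sum_(s in S) \sum_(s' in S)
     ind K [disjoint Aset T s & E] * ind K [disjoint Aset T s' & E])).
    by apply: eq_bigr => E _; congr (_ * _); rewrite mulr_suml; apply: eq_bigr => s _; rewrite mulr_sumr.
  rewrite Ex_sum (eq_bigr (fun=> #|S|%:R * r ^+ 2 + (r - r ^+ 2))).
    by rewrite sumr_const [RHS]mulrC mulr_natr.
  move=> s sS; rewrite Ex_sum (eq_bigr (fun s' => r ^+ 2 + ind K (s == s') * (r - r ^+ 2))).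
    rewrite big_split /= sumr_const [in RHS]mulrC mulr_natr; congr (_ + _).
    rewrite (bigD1 s) //= /ind eqxx mul1r big1 ?addr0 //.
    by move=> s' /andP [_ ne]; rewrite eq_sym (negbTE ne) mul0r.
  by move=> s' s'S; rewrite EZZ.
transitivity (Ex U p (fun E => Y E * Y E + ((- 2 * #|S|%:R * r) * Y E
                 + (#|S|%:R * r) ^+ 2 * 1))).
  by apply: eq_bigr => E _; congr (_ * _); ring.
rewrite !ExD !ExZ Ex1 EY EYY; ring.
Qed.

Lemma cheb (K : realFieldType) (V : finType) (S T : {set V})
  (U : {set {set V}}) (p : K) (Q : pred {set {set V}}) (a : K) :
  0 <= p <= 1 ->
  [disjoint S & T] ->
  (forall s t, s \in S -> t \in T -> [set s; t] \in U) ->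
  let r := (1 - p) ^+ #|T| in
  let Y := fun E : {set {set V}} => \sum_(s in S) ind K [disjoint Aset T s & E] in
  (forall E : {set {set V}}, E \subset U -> Q E -> a <= Y E) ->
  #|S|%:R * r < a ->
  \sum_(E : {set {set V}} | (E \subset U) && Q E) W U p E <= #|S|%:R * (r - r ^+ 2) / (a - #|S|%:R * r) ^+ 2.
Proof.
move=> hp dST hU r Y hQ ha.
set m := #|S|%:R * r.
have am : 0 < a - m by rewrite subr_gt0.
rewrite -(variance p dST hU) -/r -/Y -/m mulrC -ExZ.
rewrite big_mkcondr /=; apply: ler_sum => E hE.
case: (boolP (Q E)) => qE; last first.
  by rewrite mulr_ge0 ?W_ge0 // mulr_ge0 ?sqr_ge0 // invr_ge0 sqr_ge0.
rewrite -[X in X <= _]mulr1; apply: ler_wpM2l; first exact: W_ge0.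
rewrite mulrC ler_pdivlMr ?exprn_gt0 // mul1r.
have := hQ E hE qE => hY.
rewrite /Y in hY.
rewrite ler_sqr ?nnegrE; lra.
Qed.

Lemma Y_cover (K : realFieldType) (V : finType) (S T : {set V}) (E : {set {set V}}) :
  #|S|%:R - #|cover E|%:R <= \sum_(s in S) ind K [disjoint Aset T s & E].
Proof.
set D := fun s => [disjoint Aset T s & E].
have e1 : \sum_(s in S) ind K (D s) = #|[set s in S | D s]|%:R.
  rewrite /ind -big_mkcondr /= sumr_const cardsE.
  by congr (_ *+ _); apply: eq_card => s; rewrite !inE.
have h : (#|S| <= #|[set s in S | D s]| + #|cover E|)%nat.
  have := cardsID [set s | D s] S.
  have : (#|S :\: [set s | D s]| <= #|cover E|)%nat.
    apply: subset_leq_card; apply/subsetP => s; rewrite !inE => /andP [nD sS].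
    case/pred0Pn: nD => e /andP [/= /imsetP [t tT ->] eE].
    by apply/bigcupP; exists [set s; t] => //; rewrite !inE eqxx.
  have -> : S :&: [set s | D s] = [set s in S | D s].
    by apply/setP => s; rewrite !inE.
  lia.
rewrite e1 lerBlDr -natrD ler_nat; lia.
Qed.

Lemma bern (K : realFieldType) (p : K) (t : nat) :
  0 <= p <= 1 -> 0 <= (1 - p) ^+ t <= 1 /\ (1 - p) ^+ t * (1 + p * t%:R) <= 1.
Proof.
case/andP => h0 h1; elim: t => [|t [/andP [q0 q1] IH]].
  by rewrite expr0 mulr0 addr0 mulr1 ler01 lexx.
rewrite exprS -natr1.
set q := (1 - p) ^+ t in q0 q1 IH *.
split; first by apply/andP; split; nra.
nra.
Qed.

Lemma mu_bound (K : realFieldType) (n s t : nat) (p c : K) :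
  0 <= c -> 0 <= p <= 1 -> (n * n <= 4 * s + 2)%nat -> (n * n <= 4 * t)%nat ->
  8 * c + 2 <= n%:R -> 64 * c <= n%:R ^+ 3 * p ->
  c * n%:R <= s%:R * (1 - (1 - p) ^+ t).
Proof.
move=> c0 hp hs ht hn hpn.
have [/andP [r0 r1] hb] := bern t hp.
move: hp => /andP [p0 p1].
set r := (1 - p) ^+ t in r0 r1 hb *.
have hs' : n%:R * n%:R <= 4 * s%:R + 2 :> K.
  by rewrite -!natrM -natrD ler_nat.
have ht' : n%:R * n%:R <= 4 * t%:R :> K.
  by rewrite -!natrM ler_nat.
set N := n%:R in hs' ht' hn hpn *.
set S := s%:R in hs' *.
set T := t%:R in ht' hb *.
have N2 : 2 <= N by lra.
have hx : p * N * N <= 4 * (p * T) by nra.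
case: (lerP 1 (p * T)) => hx1.
  have : 1 <= 2 * (1 - r) by nra.
  nra.
have hr : p * T <= 2 * (1 - r) by nra.
have hS : N * N <= 8 * S by nra.
have : N ^+ 3 * p = N * N * N * p by ring.
nra.
Qed.

End Alg.

Section Fin.
Local Open Scope ring_scope.
Lemma prob_eq n (p : R) : prob_def0 n p =
  \sum_(E : {set {set cplx n}} | (E \subset pedges n) && (deficiency E == Posz 0))
     W (pedges n) p E.
Proof.
rewrite /prob_def0; apply: eq_bigr => E _.
by rewrite /ER_weight /W !RpowE.
Qed.

Lemma prob_ge0 n (p : R) : 0 <= p <= 1 -> 0 <= prob_def0 n p.
Proof. by move=> hp; rewrite prob_eq; apply: sumr_ge0 => E _; apply: W_ge0. Qed.

Lemma step n (p c eps : R) : 0 < eps -> c = 4 + 8 / eps -> 0 <= p <= 1 ->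
  8 * c + 2 <= n%:R -> 64 * c <= n%:R ^+ 3 * p -> prob_def0 n p < eps.
Proof.
move=> heps hc hp hn hpn.
have c0 : 0 <= c by rewrite hc; apply: addr_ge0 => //; apply: divr_ge0 => //; exact: ltW.
have [S [T [sS sT dST hS hT]]] := split_set (C0 n).
have hU : forall s t, s \in S -> t \in T -> [set s; t] \in pedges n.
  move=> s t sS' tT; rewrite inE subUset !sub1set (subsetP sS _ sS') (subsetP sT _ tT) /=.
  have st : s != t.
    by apply/eqP => est; move: (disjointFr dST sS'); rewrite est tT.
  by rewrite cards2 st.
have hC := C0_card n.
have cS : (n * n <= 4 * #|S| + 2)%nat by lia.
have cT : (n * n <= 4 * #|T|)%nat by lia.
have hmu := mu_bound c0 hp cS cT hn hpn.
have [/andP [r0 r1] _] := bern #|T| hp.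
set r := (1 - p) ^+ #|T| in hmu r0 r1 *.
set mu := #|S|%:R * (1 - r) in hmu.
pose a := #|S|%:R - 2 * (n%:R : R).
have hQ : forall E : {set {set cplx n}}, E \subset pedges n ->
    (fun E => deficiency E == Posz 0) E ->
    a <= \sum_(s in S) ind R [disjoint Aset T s & E].
  move=> E hE /= /eqP hd.
  apply: le_trans (Y_cover R S T E).
  have hcov : (#|cover E|%:R <= (2 * n)%:R :> R) by rewrite ler_nat; exact: def0_cover.
  rewrite natrM in hcov; rewrite /a.
  lra.
have n1 : 1 <= n%:R :> R by lra.
have emu : mu = #|S|%:R - #|S|%:R * r by rewrite /mu; ring.
have c4 : 4 <= c.
  by rewrite hc lerDl; apply: divr_ge0 => //; exact: ltW.
have cn : 4 * n%:R <= c * n%:R by nra.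
have ham : #|S|%:R * r < a by rewrite /a; lra.
have hch := cheb (Q := fun E => deficiency E == Posz 0) hp dST hU hQ ham.
rewrite prob_eq; apply: le_lt_trans hch _.
have am : a - #|S|%:R * r = mu - 2 * n%:R by rewrite /a /mu; ring.
rewrite am ltr_pdivrMr; last by rewrite exprn_gt0 //; lra.
have e1 : #|S|%:R * (r - r ^+ 2) = mu * r by rewrite /mu; ring.
rewrite e1.
have ec : eps * c = 4 * eps + 8 by rewrite hc; field; lra.
have mu0 : 0 <= mu by lra.
have h1 : mu * r <= mu by nra.
have h2 : mu <= 2 * (mu - 2 * n%:R) by lra.
have h3 : 8 * n%:R <= eps * mu by nra.
nra.
Qed.

Lemma main_aux (p : nat -> R) : (forall n, 0 <= p n <= 1) ->
  (forall M, exists N, forall n, (N <= n)%nat -> M < n%:R ^+ 3 * p n) ->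
  forall eps, 0 < eps -> exists N, forall n, (N <= n)%nat -> prob_def0 n (p n) < eps.
Proof.
move=> hp hlim eps heps.
pose c := 4 + 8 / eps.
have c0 : 0 <= 8 * c + 2.
  by rewrite /c addr_ge0 // mulr_ge0 // addr_ge0 // divr_ge0 //; exact: ltW.
have [N1 h1] := hlim (64 * c).
have hb := archi_boundP c0.
exists (maxn N1 (Num.bound (8 * c + 2))) => n hn.
apply: (@step n (p n) c eps heps erefl (hp n)).
  apply: le_trans (ltW hb) _; rewrite ler_nat; apply: leq_trans hn; exact: leq_maxr.
apply: ltW; apply: h1; apply: leq_trans hn; exact: leq_maxl.
Qed.

Lemma main_std (p : nat -> R) : (forall n, Rle 0 (p n) /\ Rle (p n) 1) ->
  (forall M, exists N, forall n, (N <= n)%nat -> Rlt M (Rmult (pow (INR n) 3) (p n))) ->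
  Un_cv (fun n => prob_def0 n (p n)) 0.
Proof.
move=> hp hlim.
have hp' : forall n, 0 <= p n <= 1.
  by move=> n; case: (hp n) => h0 h1; apply/andP; split; apply/RleP.
have hlim' : forall M, exists N, forall n, (N <= n)%nat -> M < n%:R ^+ 3 * p n.
  move=> M; have [N hN] := hlim M; exists N => n hn; apply/RltP.
  by rewrite -INRE -RpowE; apply: hN.
move=> eps /RltP heps.
have [N hN] := main_aux hp' hlim' heps.
exists N => n /ssrnat.leP hn; rewrite RdistE subr0 ger0_norm ?prob_ge0 //.
by apply/RltP; apply: hN.
Qed.
End Fin.

Theorem mainTheorem1 (p : nat -> R)
  (hp : forall n, (0 <= p n <= 1)%R)
  (hlim : cv_infty (fun n => (INR n ^ 3 * p n)%R)) :
  Un_cv (fun n => prob_def0 n (p n)) 0%R.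
Proof.
apply: main_std => // M; have [N hN] := hlim M; exists N => n /ssrnat.leP hn; exact: hN.
Qed.
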